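(* Let $G=(V,E)$ be an undirected graph (finite or infinite) and let $\widehat A,\widehat B$ be two color classes of $G$. Then $\widehat A=\widehat B$ if and only if $\widetilde A=\widetilde B$.
   Context: A graph $G=(V,E)$ has vertex set $V$ and edge set $E\subseteq V^2$; it is undirected if $E$ is irreflexive and symmetric. Implication classes: on $E$ define $(a,b)\Gamma(a',b')$ iff either $a=a'$ and $(b,b')\notin E$, or $b=b'$ and $(a,a')\notin E$; the classes of the transitive closure $\Gamma^*$ are the implication classes. For an implication class $A$, $A^{-1}=\{(b,a):(a,b)\in A\}$ and the color class is $\widehat A=A\cup A^{-1}$. $\widetilde A$ denotes the set of vertices $a$ such that $(a,b)\in A$ or $(b,a)\in A$ for some $b$ (the vertex set spanned by $\widehat A$). *)

(* Defs.v *)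
(* Graphs may be infinite: vertex set is an arbitrary Type V,
   edge set a Prop-valued relation E (E a b  <->  (a,b) \in E). *)
From Stdlib Require Import Relations.
Set Implicit Arguments.

Section Graphs.
Variable V : Type.
Variable E : V -> V -> Prop.

Definition undirected : Prop :=
  (forall a, ~ E a a) /\ (forall a b, E a b -> E b a).

Definition Gamma (e f : V * V) : Prop :=
  E (fst e) (snd e) /\ E (fst f) (snd f) /\
  ((fst e = fst f /\ ~ E (snd e) (snd f)) \/
   (snd e = snd f /\ ~ E (fst e) (fst f))).

Definition implication_class (A : V * V -> Prop) : Prop :=
  exists a b, E a b /\
    forall x y, A (x, y) <-> (E x y /\ clos_refl_trans _ Gamma (a, b) (x, y)).

Definition inv_class (A : V * V -> Prop) : V * V -> Prop :=
  fun p => A (snd p, fst p).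

Definition color_class (A : V * V -> Prop) : V * V -> Prop :=
  fun p => A p \/ inv_class A p.

Definition span_class (A : V * V -> Prop) : V -> Prop :=
  fun v => exists w, A (v, w) \/ A (w, v).

End Graphs.

(* Main.v *)
Require Import Defs.
From Stdlib Require Import Relations Classical.


Definition swp {V : Type} (p : V * V) : V * V := (snd p, fst p).

Lemma Gamma_sym {V : Type} {E : V -> V -> Prop} (HE : undirected E) e f :
  Gamma E e f -> Gamma E f e.
Proof.
  destruct HE as [Hirr Hsym]. unfold Gamma.
  intros [H1 [H2 [[H3 H4]|[H3 H4]]]]; repeat split; auto.
  - left; split; auto.
  - right; split; auto.
Qed.

Lemma Gamma_swp {V : Type} {E : V -> V -> Prop} (HE : undirected E) e f :
  Gamma E e f -> Gamma E (swp e) (swp f).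
Proof.
  destruct HE as [Hirr Hsym]. destruct e as [a b], f as [c d]; unfold Gamma, swp; simpl.
  intros [H1 [H2 [[H3 H4]|[H3 H4]]]]; repeat split; auto.
Qed.

Lemma rt_sym {V : Type} {E : V -> V -> Prop} (HE : undirected E) e f :
  clos_refl_trans _ (Gamma E) e f -> clos_refl_trans _ (Gamma E) f e.
Proof.
  induction 1.
  - apply rt_step. apply Gamma_sym; auto.
  - apply rt_refl.
  - eapply rt_trans; eauto.
Qed.

Lemma rt_swp {V : Type} {E : V -> V -> Prop} (HE : undirected E) e f :
  clos_refl_trans _ (Gamma E) e f ->
  clos_refl_trans _ (Gamma E) (swp e) (swp f).
Proof.
  induction 1.
  - apply rt_step. apply Gamma_swp; auto.
  - apply rt_refl.
  - eapply rt_trans; eauto.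
Qed.

Definition RR {V : Type} (E : V -> V -> Prop) (e f : V * V) : Prop :=
  clos_refl_trans _ (Gamma E) e f \/ clos_refl_trans _ (Gamma E) e (swp f).

Lemma swp_swp {V : Type} (p : V * V) : swp (swp p) = p.
Proof. destruct p; reflexivity. Qed.

Lemma RR_sym {V : Type} {E : V -> V -> Prop} (HE : undirected E) {e f} :
  RR E e f -> RR E f e.
Proof.
  intros [H|H].
  - left; apply rt_sym; auto.
  - right. apply rt_swp in H; auto. rewrite swp_swp in H. apply rt_sym; auto.
Qed.

Lemma RR_trans {V : Type} {E : V -> V -> Prop} (HE : undirected E) {e f g} :
  RR E e f -> RR E f g -> RR E e g.
Proof.
  intros [H|H] [H'|H'].
  - left; eapply rt_trans; eauto.
  - right; eapply rt_trans; eauto.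
  - right. apply rt_swp in H'; auto. eapply rt_trans; eauto.
  - left. apply rt_swp in H'; auto. rewrite swp_swp in H'. eapply rt_trans; eauto.
Qed.

Lemma col_char {V : Type} {E : V -> V -> Prop} (HE : undirected E) (A : V * V -> Prop) {a0 b0 : V} :
  E a0 b0 ->
  (forall x y, A (x, y) <-> (E x y /\ clos_refl_trans _ (Gamma E) (a0, b0) (x, y))) ->
  forall q, color_class A q <-> (E (fst q) (snd q) /\ RR E (a0, b0) q).
Proof.
  destruct HE as [Hirr Hsym]. intros H0 HA [x y]. unfold color_class, inv_class, RR, swp; simpl.
  rewrite !HA. split.
  - intros [[H1 H2]|[H1 H2]]; split; auto.
  - intros [H1 [H2|H2]]; auto.
Qed.

Lemma col_E {V : Type} {E : V -> V -> Prop} (HE : undirected E) {A} :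
  implication_class E A -> forall q, color_class A q -> E (fst q) (snd q).
Proof.
  intros [a0 [b0 [H0 HA]]] q Hq. apply (col_char HE A H0 HA) in Hq. tauto.
Qed.

Lemma col_sym {V : Type} (A : V * V -> Prop) x y :
  color_class A (x, y) -> color_class A (y, x).
Proof. unfold color_class, inv_class; simpl; tauto. Qed.

Lemma col_Gamma {V : Type} {E : V -> V -> Prop} (HE : undirected E) {A} :
  implication_class E A -> forall e f, Gamma E e f -> color_class A e -> color_class A f.
Proof.
  intros [a0 [b0 [H0 HA]]] e f HG He.
  rewrite (col_char HE A H0 HA) in *. destruct He as [_ He].
  split. { destruct HG as [_ [Hf _]]; auto. }
  eapply RR_trans; eauto. left. apply rt_step; auto.
Qed.

Lemma col_disj {V : Type} {E : V -> V -> Prop} (HE : undirected E) {A B} :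
  implication_class E A -> implication_class E B ->
  forall p, color_class A p -> color_class B p ->
  forall q, color_class A q -> color_class B q.
Proof.
  intros [a0 [b0 [H0 HA]]] [c0 [d0 [H1 HB]]] p Hp Hp' q Hq.
  rewrite (col_char HE A H0 HA) in *. rewrite (col_char HE B H1 HB) in *.
  destruct Hp as [_ R1], Hp' as [_ R2], Hq as [Eq R3]. split; auto.
  apply (RR_trans HE (RR_trans HE R2 (RR_sym HE R1)) R3).
Qed.

Lemma lemL {V : Type} {E : V -> V -> Prop} (HE : undirected E) {A} x y v :
  implication_class E A -> color_class A (x, y) ->
  E v x -> E v y -> ~ color_class A (v, x) -> ~ color_class A (v, y) ->
  ~ span_class A v.
Proof.
  intros HI Hxy Hvx Hvy Hnx Hny [w Hw].
  assert (Hc : color_class A (v, w)) by (unfold color_class, inv_class; simpl; tauto).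
  pose (P := fun e : V * V => E v (fst e) /\ E v (snd e) /\
              ~ color_class A (v, fst e) /\ ~ color_class A (v, snd e)).
  assert (Hstep : forall e f, Gamma E e f -> color_class A e -> P e -> P f).
  { pose proof HE as [Hirr Hsym].
    intros [p c] [p' c'] HG He HP. unfold P in HP; simpl in HP. destruct HP as [Q1 [Q2 [Q3 Q4]]].
    assert (Hf : color_class A (p', c')) by (eapply col_Gamma; eauto).
    pose proof HG as HG'.
    destruct HG' as [Ee [Ef [[Heq Hn]|[Heq Hn]]]]; simpl in *; subst.
    - assert (Hvc' : E v c').
      { apply NNPP; intro Hn'. apply Q3. apply col_sym.
        apply (col_Gamma HE HI (p', c') (p', v)); auto.
        apply Gamma_sym; [split; auto|]. repeat split; simpl; auto; try (left; split; auto; fail); try (right; split; auto; fail). }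
      unfold P; simpl; split; [exact Q1|split; [exact Hvc'|split; [exact Q3|]]].
      intro Hc'. apply Q4. apply (col_Gamma HE HI (v, c') (v, c)); auto.
      repeat split; simpl; auto; try (left; split; auto; fail); try (right; split; auto; fail).
    - assert (Hvp' : E v p').
      { apply NNPP; intro Hn'. apply Q4.
        apply (col_Gamma HE HI (p', c') (v, c')); auto.
        repeat split; simpl; auto; try (left; split; auto; fail); try (right; split; auto; fail). }
      unfold P; simpl; split; [exact Hvp'|split; [exact Q2|split; [|exact Q4]]].
      intro Hc'. apply Q3. apply (col_Gamma HE HI (v, p') (v, p)); auto.
      repeat split; simpl; auto; try (left; split; auto; fail); try (right; split; auto; fail). }
  assert (Hrt : forall e f, clos_refl_trans _ (Gamma E) e f -> color_class A e -> P e -> P f).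
  { intros e f H. apply clos_rt_rt1n in H. induction H; intros; auto.
    apply IHclos_refl_trans_1n; [eapply col_Gamma; eauto|]. eapply Hstep; eauto. }
  assert (HPxy : P (x, y)) by (repeat split; auto).
  destruct HI as [a0 [b0 [H0 HA]]].
  pose proof (col_char HE A H0 HA) as Hch.
  assert (HR : RR E (x, y) (v, w)).
  { exact (RR_trans HE (RR_sym HE (proj2 (proj1 (Hch _) Hxy))) (proj2 (proj1 (Hch _) Hc))). }
  destruct HE as [Hirr Hsym].
  destruct HR as [HR|HR].
  - apply (Hrt _ _ HR) in HPxy; auto. destruct HPxy as [Hvv _]. simpl in Hvv. exact (Hirr _ Hvv).
  - apply (Hrt _ _ HR) in HPxy; auto. destruct HPxy as [_ [Hvv _]]. simpl in Hvv. exact (Hirr _ Hvv).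
Qed.

Lemma span_col {V : Type} (A : V * V -> Prop) v :
  span_class A v <-> exists w, color_class A (v, w).
Proof. unfold span_class, color_class, inv_class; simpl; tauto. Qed.

Lemma lemM {V : Type} {E : V -> V -> Prop} (HE : undirected E) A B :
  implication_class E A -> implication_class E B ->
  (forall v, span_class A v <-> span_class B v) ->
  forall p, color_class A p -> color_class B p.
Proof.
  intros HA HB Hs [a b] Hab. apply NNPP; intro Hn.
  assert (Eab : E a b) by (apply (col_E HE HA) in Hab; auto).
  assert (Ha : span_class B a) by (apply Hs, span_col; eauto).
  apply span_col in Ha. destruct Ha as [w Haw].
  assert (Eaw : E a w) by (apply (col_E HE HB) in Haw; auto).
  pose proof HE as [Hirr Hsym].
  destruct (classic (E b w)) as [Ebw|Nbw].
  2:{ apply Hn. apply (col_Gamma HE HB (a, w) (a, b)); auto. repeat split; simpl; auto; try (left; split; auto; fail); try (right; split; auto; fail). }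
  destruct (classic (color_class B (b, w))) as [Cbw|Cbw].
  - apply (lemL HE a b w HA); auto.
    + intro C. apply Hn. eapply (col_disj HE HA HB (w, a)); eauto. apply col_sym; auto.
    + intro C. apply Hn. eapply (col_disj HE HA HB (w, b)); eauto. apply col_sym; auto.
    + apply Hs. apply span_col. exists a. apply col_sym; auto.
  - apply (lemL HE a w b HB); auto.
    + intro C. apply Hn. apply col_sym; auto.
    + apply Hs. apply span_col. exists a. apply col_sym; auto.
Qed.

Theorem proposition3p1 (V : Type) (E : V -> V -> Prop)
  (HE : undirected E) (A B : V * V -> Prop)
  (HA : implication_class E A) (HB : implication_class E B) :
  (forall p, color_class A p <-> color_class B p) <->
  (forall v, span_class A v <-> span_class B v).
Proof.
  split.
  - intros H v. rewrite !span_col. split; intros [w Hw]; exists w; apply H; auto.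
  - intros H p. split.
    + apply (lemM HE A B HA HB H).
    + apply (lemM HE B A HB HA). intro v; symmetry; auto.
Qed.
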